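(* For every $n$ and any $(\hat\imath,\hat\jmath)\in\mathcal E$ with associated matrices $B^n_1,B^n_2$, $$\inf_{u^s\in\Delta_J}\Big(1+\big\langle e,(B^n_1)^{-1}B^n_2u^s\big\rangle\Big)>0.$$
   Context: Network: $\mathcal I=\{1,\dots,I\}$, $\mathcal J=\{1,\dots,J\}$, edges $\mathcal E\subset\mathcal I\times\mathcal J$ with the bipartite graph $\mathcal G=(\mathcal I\cup\mathcal J,\mathcal E)$ a tree; $\mathbb R^{\mathcal G}$ denotes arrays in $\mathbb R^{I\times J}$ vanishing off $\mathcal E$. For each $n$, service rates $\mu^n_{ij}>0$ for $(i,j)\in\mathcal E$; $\mathcal J(i)=\{j:(i,j)\in\mathcal E\}$. Let $\mathcal D=\{(\alpha,\beta)\in\mathbb R^I\times\mathbb R^J:\sum_i\alpha_i=\sum_j\beta_j\}$ and $\Psi:\mathcal D\to\mathbb R^{\mathcal G}$ the unique linear map with $\sum_j\Psi_{ij}(\alpha,\beta)=\alpha_i$, $\sum_i\Psi_{ij}(\alpha,\beta)=\beta_j$. For $(\hat\imath,\hat\jmath)\in\mathcal E$, $B^n_1\in\mathbb R^{I\times I}$ and $B^n_2\in\mathbb R^{I\times J}$ are the unique matrices with column $\hat\jmath$ of $B^n_2$ zero and $\sum_{j\in\mathcal J(i)}\mu^n_{ij}\Psi_{ij}(\alpha,\beta)=(B^n_1\alpha+B^n_2\beta)_i$ for all $i$ and $(\alpha,\beta)\in\mathcal D$ ($B^n_1$ is invertible). $e$ is the all-ones vector and $\Delta_J=\{u\in\mathbb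 R^J_+:\langle e,u\rangle=1\}$. *)

(* Defs.v *)
From HB Require Import structures.
From mathcomp Require Import all_boot all_order all_algebra.
From mathcomp Require Import reals.
Set Implicit Arguments. Unset Strict Implicit. Unset Printing Implicit Defensive.
Import Order.TTheory GRing.Theory Num.Theory.
Local Open Scope ring_scope.

Definition bip_adj (I J : nat) (E : {set 'I_I * 'I_J}) : rel ('I_I + 'I_J) :=
  fun x y => match x, y with
             | inl i, inr j => (i, j) \in E
             | inr j, inl i => (i, j) \in E
             | _, _ => false
             end.

Definition is_tree (I J : nat) (E : {set 'I_I * 'I_J}) : Prop :=
  (forall x y : 'I_I + 'I_J, connect (bip_adj E) x y) /\ #|E| = (I + J).-1.

Definition in_RG (R : ringType) (I J : nat) (E : {set 'I_I * 'I_J})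
  (x : 'M[R]_(I, J)) : Prop := forall i j, (i, j) \notin E -> x i j = 0.

Definition in_D (R : ringType) (I J : nat) (a : 'cV[R]_I) (b : 'cV[R]_J) : Prop :=
  \sum_i a i 0 = \sum_j b j 0.

(* x = Psi(alpha, beta): x in R^G with row sums alpha and column sums beta
   (Psi is the unique such map since G is a tree). *)
Definition is_Psi (R : ringType) (I J : nat) (E : {set 'I_I * 'I_J})
  (a : 'cV[R]_I) (b : 'cV[R]_J) (x : 'M[R]_(I, J)) : Prop :=
  [/\ in_RG E x, forall i, \sum_j x i j = a i 0 & forall j, \sum_i x i j = b j 0].

(* B1, B2 are the matrices associated with (ihat, jhat): column jhat of B2
   is zero, and sum_{j in J(i)} mu_ij Psi_ij(alpha,beta) = (B1 alpha + B2 beta)_i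
   for all i and (alpha,beta) in D. *)
Definition is_B_pair (R : ringType) (I J : nat) (E : {set 'I_I * 'I_J})
  (mu : 'M[R]_(I, J)) (jh : 'I_J) (B1 : 'M[R]_I) (B2 : 'M[R]_(I, J)) : Prop :=
  (forall i, B2 i jh = 0) /\
  (forall (a : 'cV[R]_I) (b : 'cV[R]_J) (x : 'M[R]_(I, J)),
     in_D a b -> is_Psi E a b x ->
     forall i, \sum_(j | (i, j) \in E) mu i j * x i j = (B1 *m a + B2 *m b) i 0).

Definition in_simplex (R : numDomainType) (J : nat) (u : 'cV[R]_J) : Prop :=
  (forall j, 0 <= u j 0) /\ \sum_j u j 0 = 1.

(* Main.v *)
Require Import Defs.
From HB Require Import structures.
From mathcomp Require Import all_boot all_order all_algebra.
From mathcomp Require Import reals.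
Import Order.TTheory GRing.Theory Num.Theory.
Local Open Scope ring_scope.

Lemma edge_rel (R : realType) (I J : nat) (E : {set 'I_I * 'I_J})
  (mu : 'M[R]_(I, J)) (jh : 'I_J) (B1 : 'M[R]_I) (B2 : 'M[R]_(I, J)) :
  is_B_pair E mu jh B1 B2 -> forall i j, (i, j) \in E ->
  forall i', B1 i' i + B2 i' j = (i' == i)%:R * mu i j.
Proof.
move=> [_ HB] i j Eij i'.
have hD : in_D (delta_mx i 0 : 'cV[R]_I) (delta_mx j 0 : 'cV[R]_J).
  rewrite /in_D (bigD1 i) //= big1 ?addr0; last by move=> k nk; rewrite mxE (negPf nk).
  rewrite (bigD1 j) //= big1 ?addr0; last by move=> k nk; rewrite mxE (negPf nk).
  by rewrite !mxE !eqxx.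
have hP : is_Psi E (delta_mx i 0 : 'cV[R]_I) (delta_mx j 0 : 'cV[R]_J) (delta_mx i j).
  split.
  - move=> a b nab; rewrite mxE; apply/eqP; rewrite pnatr_eq0 eqb0.
    apply/negP => /andP[/eqP ea /eqP eb]; by move: nab; rewrite ea eb Eij.
  - move=> a; rewrite (bigD1 j) //= big1 ?addr0; last first.
      by move=> k nk; rewrite mxE (negPf nk) andbF.
    by rewrite !mxE !eqxx andbT.
  - move=> b; rewrite (bigD1 i) //= big1 ?addr0; last first.
      by move=> k nk; rewrite mxE (negPf nk).
    by rewrite !mxE !eqxx ?andbT.
have := HB _ _ _ hD hP i'.
rewrite [in X in _ = X -> _]mxE.
have -> : \sum_(j' | (i', j') \in E) mu i' j' * delta_mx i j i' j' = (i' == i)%:R * mu i j.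
  have [ei|nei] := eqVneq i' i; last first.
    by rewrite mul0r big1 // => k _; rewrite mxE (negPf nei) mulr0.
  rewrite ei (bigD1 j) //=.
  rewrite big1 ?addr0; last first.
    by move=> k /andP[_ /negPf nk]; rewrite mxE nk andbF mulr0.
  by rewrite mxE !eqxx mulr1 mul1r.
have -> : (B1 *m (delta_mx i 0 : 'cV[R]_I)) i' 0 = B1 i' i.
  rewrite mxE (bigD1 i) //= big1 ?addr0.
    by rewrite mxE !eqxx mulr1.
  by move=> k nk; rewrite mxE (negPf nk) mulr0.
have -> : (B2 *m (delta_mx j 0 : 'cV[R]_J)) i' 0 = B2 i' j.
  rewrite mxE (bigD1 j) //= big1 ?addr0.
    by rewrite mxE !eqxx mulr1.
  by move=> k nk; rewrite mxE (negPf nk) mulr0.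
by move=> ->.
Qed.

Theorem corollary2 (R : realType) (I J : nat) (E : {set 'I_I * 'I_J})
  (mu : 'M[R]_(I, J)) (ih : 'I_I) (jh : 'I_J)
  (B1 : 'M[R]_I) (B2 : 'M[R]_(I, J)) :
  is_tree E ->
  (forall i j, (i, j) \in E -> 0 < mu i j) ->
  (ih, jh) \in E ->
  is_B_pair E mu jh B1 B2 ->
  B1 \in unitmx ->
  exists2 c : R, 0 < c &
    forall u : 'cV[R]_J, in_simplex u ->
      c <= 1 + \sum_i (invmx B1 *m B2 *m u) i 0.
Proof.
move=> [conn _] mupos Ehat HB unitB1.
have Hedge := @edge_rel R I J E mu jh B1 B2 HB.
have [r rB1 rdef] : exists2 r : 'rV[R]_I, r *m B1 = const_mx 1 & r = const_mx 1 *m invmx B1.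
  by exists (const_mx 1 *m invmx B1) => //; rewrite -mulmxA mulVmx // mulmx1.
have [q qdef] : exists q : 'I_J -> R, forall j, q j = 1 + (r *m B2) 0 j by exists (fun j => 1 + (r *m B2) 0 j).
have qE : forall i j, (i, j) \in E -> q j = r 0 i * mu i j.
  move=> i j Eij; rewrite qdef.
  have h1 : 1 = (r *m B1) 0 i by rewrite rB1 mxE.
  rewrite {1}h1 !mxE -big_split /=.
  rewrite (bigD1 i) //= big1 ?addr0.
    by rewrite -mulrDr Hedge // eqxx mul1r.
  by move=> k nk; rewrite -mulrDr Hedge // (negPf nk) mul0r mulr0.
have qh : q jh = 1.
  rewrite qdef mxE big1 ?addr0 // => k _; by case: HB => -> _; rewrite mulr0.
pose a : pred ('I_I + 'I_J) := fun v => match v with inl i => 0 < r 0 i | inr j => 0 < q j end.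
have cl : closed (bip_adj E) a.
  move=> [x|x] [y|y] //= Exy.
    by rewrite !unfold_in /= (qE _ _ Exy) pmulr_lgt0 ?mupos.
  by rewrite !unfold_in /= (qE _ _ Exy) pmulr_lgt0 ?mupos.
have qpos : forall j, 0 < q j.
  move=> j; have := closed_connect cl (conn (inr jh) (inr j)).
  by rewrite !unfold_in /= qh ltr01 => <-.
pose c := \big[Num.min/1]_j q j.
exists c.
  rewrite /c; apply: (big_ind (fun x => 0 < x)) => //.
  by move=> x y x0 y0; rewrite lt_min x0 y0.
move=> u [u0 u1].
have cq : forall j, c <= q j.
  move=> j; rewrite /c (bigD1 j) //= ge_min lexx //.
have -> : 1 + \sum_i (invmx B1 *m B2 *m u) i 0 = \sum_j q j * u j 0.
  have -> : \sum_i (invmx B1 *m B2 *m u) i 0 = (r *m B2 *m u) 0 0.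
    rewrite rdef -!mulmxA mxE; apply: eq_bigr => i _; have c1 : (const_mx 1 : 'rV[R]_I) 0 i = 1 by rewrite mxE.
    by rewrite c1 mul1r.
  rewrite mxE.
  under [RHS]eq_bigr => j _ do rewrite qdef mulrDl mul1r.
  rewrite -{1}u1 -big_split; apply: eq_bigr => j _; reflexivity.
rewrite -[c]mulr1 -u1 mulr_sumr; apply: ler_sum => j _.
by rewrite mulrC [_ * u j 0]mulrC ler_wpM2l.
Qed.
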